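(* Let $\boldsymbol{\Sigma}=\boldsymbol{U}\boldsymbol{\Lambda}\boldsymbol{U}^\top\in\mathbb{R}^{p\times p}$ be positive semidefinite, $\boldsymbol{\beta}\in\mathbb{R}^p$, $r\le k$, and $S_k\in\mathbb{R}^{p\times k}$. Write $\boldsymbol{U}=[\boldsymbol{U}_r\ \boldsymbol{U}_{p-r}]$, $\boldsymbol{\Lambda}=\mathrm{diag}(\boldsymbol{\Lambda}_r,\boldsymbol{\Lambda}_{p-r})$, $\boldsymbol{\Sigma}_{p-r}=\boldsymbol{U}_{p-r}\boldsymbol{\Lambda}_{p-r}\boldsymbol{U}_{p-r}^\top$, $\widetilde S_1=\boldsymbol{U}_r^\top S_k$, $\widetilde S_2=\boldsymbol{U}_{p-r}^\top S_k$, $\widetilde{\boldsymbol{\beta}}_1=\boldsymbol{U}_r^\top\boldsymbol{\beta}$, $\widetilde{\boldsymbol{\beta}}_2=\boldsymbol{U}_{p-r}^\top\boldsymbol{\beta}$, and assume $\widetilde S_1\widetilde S_1^\top$ and $\widetilde S_2^\top\boldsymbol{\Lambda}_{p-r}\widetilde S_2$ are invertible. Let $\boldsymbol{\xi}^*$ be a minimizer of $(\boldsymbol{\beta}-S_k\boldsymbol{\xi})^\top\boldsymbol{\Sigma}_{p-r}(\boldsymbol{\beta}-S_k\boldsymbol{\xi})$ over $\boldsymbol{\xi}\in\mathbb{R}^k$ subject to $\boldsymbol{U}_r^\top(\boldsymbol{\beta}-S_k\boldsymbol{\xi})=\boldsymbol{0}$. Then $(\boldsymbol{\beta}-S_k\boldsymbol{\xi}^*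 )^\top\boldsymbol{\Sigma}_{p-r}(\boldsymbol{\beta}-S_k\boldsymbol{\xi}^* )\le 2L_1+2L_2$, where $$L_1=\frac{\|\widetilde S_2^\top\boldsymbol{\Lambda}_{p-r}\widetilde S_2\|_2}{\lambda_{\min}(\widetilde S_1\widetilde S_1^\top)}\|\widetilde{\boldsymbol{\beta}}_1\|_2^2,\qquad L_2=\Big(1+\kappa(\widetilde S_2^\top\boldsymbol{\Lambda}_{p-r}\widetilde S_2)\,\kappa(\widetilde S_1\widetilde S_1^\top)\Big)\,\widetilde{\boldsymbol{\beta}}_2^\top\boldsymbol{\Lambda}_{p-r}\widetilde{\boldsymbol{\beta}}_2 .$$
   Context: $\boldsymbol{\Sigma}=\boldsymbol{U}\boldsymbol{\Lambda}\boldsymbol{U}^\top$ is the eigendecomposition with $\boldsymbol{U}$ orthogonal and $\boldsymbol{\Lambda}$ diagonal with nonincreasing diagonal entries; $\boldsymbol{U}_r\in\mathbb{R}^{p\times r}$ consists of the first $r$ columns, $\boldsymbol{\Lambda}_r\in\mathbb{R}^{r\times r}$ of the first $r$ eigenvalues. $\kappa(\boldsymbol{A})=\lambda_{\max}(\boldsymbol{A})/\lambda_{\min}(\boldsymbol{A})$ is the condition number and $\|\cdot\|_2$ the spectral norm. In the paper $S_k$ has i.i.d. $\mathcal{N}(0,1)$ entries, in which case the invertibility assumptions hold almost surely when $r\le k$ and $\boldsymbol{\Lambda}_{p-r}$ has at least $k$ positive entries. *)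

(* Defs.v *)
From HB Require Import structures.
From mathcomp Require Import all_boot all_order all_algebra.
From mathcomp Require Import all_classical all_reals.
Set Implicit Arguments. Unset Strict Implicit. Unset Printing Implicit Defensive.
Import Order.TTheory GRing.Theory Num.Theory.
Local Open Scope ring_scope.
Local Open Scope classical_set_scope.

(* Largest / smallest (real) eigenvalue of a square real matrix
   (used only on symmetric matrices, whose eigenvalues are real). *)
Definition lam_max (R : realType) (n : nat) (A : 'M[R]_n) : R :=
  sup [set a : R | eigenvalue A a].
Definition lam_min (R : realType) (n : nat) (A : 'M[R]_n) : R :=
  inf [set a : R | eigenvalue A a].

Definition cond_num (R : realType) (n : nat) (A : 'M[R]_n) : R :=
  lam_max A / lam_min A.

Definition spec_norm (R : realType) (m n : nat) (A : 'M[R]_(m, n)) : R :=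
  Num.sqrt (lam_max (A^T *m A)).

Definition sqnorm (R : realType) (n : nat) (v : 'cV[R]_n) : R :=
  \sum_i v i 0 ^+ 2.

Definition psd (R : realType) (n : nat) (A : 'M[R]_n) : Prop :=
  A^T = A /\ forall x : 'cV[R]_n, 0 <= (x^T *m A *m x) 0 0.

Definition qform (R : realType) (n : nat) (A : 'M[R]_n) (x : 'cV[R]_n) : R :=
  (x^T *m A *m x) 0 0.

(* Main.v *)
Require Import Defs.
From HB Require Import structures.
From mathcomp Require Import all_boot all_order all_algebra.
From mathcomp Require Import all_classical all_reals.
From mathcomp Require Import complex.
From mathcomp Require Import ring lra.
Import Order.TTheory GRing.Theory Num.Theory.
Local Open Scope ring_scope.

Section HC.
Local Open Scope sesquilinear_scope.
Lemma herm_core (C : numClosedFieldType) n (A : 'M[C]_n) : A \is hermsymmx ->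
  (forall x : 'cV_n, (x^t* *m A *m x) 0 0 =
     \sum_i spectral_diag A 0 i * `|(spectralmx A *m x) i 0| ^+ 2) /\
  (forall x : 'cV_n, \sum_i `|(spectralmx A *m x) i 0| ^+ 2 = (x^t* *m x) 0 0) /\
  (forall i, eigenvalue A (spectral_diag A 0 i)).
Proof.
move=> Aherm.
have /hermitian_normalmx /orthomx_spectralP AE := Aherm.
set P := spectralmx A in AE *; set D := spectral_diag A in AE *.
have Pu : P \is unitarymx by apply: spectral_unitarymx.
have Punit : P \in unitmx by apply: spectral_unit.
have iP : invmx P = P^t* by apply: invmx_unitary.
have PtP : P^t* *m P = 1%:M by rewrite -iP mulVmx.
have PPt : P *m P^t* = 1%:M by rewrite -iP mulmxV.
split; [|split].
- move=> x; rewrite AE iP.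
  have -> : x^t* *m (P^t* *m diag_mx D *m P) *m x = (P *m x)^t* *m diag_mx D *m (P *m x).
    by rewrite trmx_mul map_mxM !mulmxA.
  rewrite mul_mx_diag !mxE; apply: eq_bigr => i _; rewrite !mxE.
  by rewrite normCK mulrC mulrA [_ * D 0 i]mulrC.
- move=> x; have -> : x^t* *m x = (P *m x)^t* *m (P *m x).
    by rewrite trmx_mul map_mxM mulmxA -(mulmxA _ _ P) PtP mulmx1.
  rewrite mxE; apply: eq_bigr => i _; rewrite !mxE normCK mulrC.
  done.
- move=> i; apply/eigenvalueP; exists (row i P).
    rewrite AE iP rowE !mulmxA -(mulmxA _ P) PPt mulmx1.
    by rewrite -rowE -[X in X *m P]rowE row_diag_mx -scalemxAl -rowE.
  apply/eqP => h0.
  have : row i (P *m P^t* ) = 0 by rewrite row_mul h0 mul0mx.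
  rewrite PPt => /rowP/(_ i); rewrite !mxE eqxx /=.
  by move/eqP; rewrite oner_eq0.
Qed.
End HC.

Local Notation toC := (real_complex _).

Lemma real_core (R : realType) n (A : 'M[R]_n) : A^T = A ->
  exists D : 'I_n -> R, (forall i, eigenvalue A (D i)) /\
   forall x : 'cV[R]_n, exists w : 'I_n -> R, (forall i, 0 <= w i) /\
     \sum_i w i = sqnorm x /\ qform A x = \sum_i D i * w i.
Proof.
move=> At.
pose AC := map_mx toC A.
have Ah : AC \is hermsymmx.
  apply: realsym_hermsym.
    apply/is_hermitianmxP; rewrite expr0 scale1r map_mx_id // /AC.
    by rewrite map_trmx At.
  by apply/mxOverP => i j; rewrite mxE complex_real.
have [h1 [h2 h3]] := @herm_core _ _ AC Ah.
set P := spectralmx AC in h1 h2. set DC := spectral_diag AC in h1 h3.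
have DCr i : DC 0 i = toC (complex.Re (DC 0 i)).
  rewrite RRe_real //.
  by have /mxOverP := hermitian_spectral_diag_real Ah; apply.
exists (fun i => complex.Re (DC 0 i)); split.
  move=> i; have := h3 i; rewrite DCr !eigenvalue_root_char /AC.
  by rewrite -map_char_poly fmorph_root.
move=> x; pose xC := map_mx toC x.
have xCt : (xC ^t* )%sesqui = xC^T.
  by apply/matrixP => i j; rewrite !mxE conj_Creal // complex_real.
pose w i := complex.Re (`|(P *m xC) i 0| ^+ 2).
have wE i : toC (w i) = `|(P *m xC) i 0| ^+ 2.
  by rewrite RRe_real // realX // normr_real.
exists w; split; [|split].
- move=> i; rewrite -(@lecR R) wE (_ : toC 0 = 0) //; exact: exprn_ge0.
- apply: complexI; rewrite rmorph_sum.
  rewrite (_ : \sum_i _ = \sum_i `|(P *m xC) i 0| ^+ 2); last first.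
    by apply: eq_bigr => i _; exact: wE.
  rewrite h2 xCt /sqnorm rmorph_sum mxE; apply: eq_bigr => i _.
  by rewrite !mxE rmorphXn expr2.
- apply: complexI; rewrite rmorph_sum.
  have := h1 xC; rewrite xCt => e.
  have -> : toC (qform A x) = (xC^T *m AC *m xC) 0 0.
    have -> : toC (qform A x) = (map_mx toC (x^T *m A *m x)) 0 0 by rewrite mxE.
    by rewrite !map_mxM map_trmx.
  rewrite e; apply: eq_bigr => i _.
  rewrite rmorphM (DCr i); congr (_ * _); symmetry; exact: wE.
Qed.

Lemma sqnormE (R : realType) n (x : 'cV[R]_n) : sqnorm x = (x^T *m x) 0 0.
Proof. by rewrite /sqnorm mxE; apply: eq_bigr => i _; rewrite mxE expr2. Qed.

Lemma sqnorm_ge0 (R : realType) n (x : 'cV[R]_n) : 0 <= sqnorm x.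
Proof. by apply: sumr_ge0 => i _; exact: sqr_ge0. Qed.

Lemma sqnorm_eq0 (R : realType) n (x : 'cV[R]_n) : sqnorm x = 0 -> x = 0.
Proof.
move=> /eqP; rewrite psumr_eq0 => [/allP h|i _]; last exact: sqr_ge0.
apply/matrixP => i j; rewrite ord1 !mxE.
by have := h i (mem_index_enum _); rewrite sqrf_eq0 => /eqP.
Qed.

Lemma exists_max (R : realType) n (D : 'I_n.+1 -> R) :
  exists im, forall j, D j <= D im.
Proof.
case: (@arg_maxP _ _ _ ord0 xpredT D isT) => im _ h.
by exists im => j; exact: h.
Qed.

Lemma exists_min (R : realType) n (D : 'I_n.+1 -> R) :
  exists im, forall j, D im <= D j.
Proof.
have [im h] := @exists_max _ _ (fun i => - D i).
by exists im => j; have := h j; rewrite lerN2.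
Qed.

Lemma eig_vec (R : realType) n (A : 'M[R]_n) a : A^T = A -> eigenvalue A a ->
  exists2 x : 'cV_n, 0 < sqnorm x & qform A x = a * sqnorm x.
Proof.
move=> At /eigenvalueP [v vA v0]; exists v^T.
  rewrite lt_def sqnorm_ge0 andbT; apply/eqP => /sqnorm_eq0 h.
  by move/eqP: v0; apply; rewrite -(trmxK v) h trmx0.
by rewrite /qform sqnormE trmxK vA -scalemxAl mxE.
Qed.

Lemma qform_dim0 (R : realType) (A : 'M[R]_0) x : qform A x = 0.
Proof. by rewrite /qform mxE big_ord0. Qed.

Lemma sqnorm_dim0 (R : realType) (x : 'cV[R]_0) : sqnorm x = 0.
Proof. by rewrite /sqnorm big_ord0. Qed.

Lemma rayleigh (R : realType) n (A : 'M[R]_n) : A^T = A ->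
  (forall x, qform A x <= lam_max A * sqnorm x) /\
  (forall x, lam_min A * sqnorm x <= qform A x) /\
  ((0 < n)%N -> eigenvalue A (lam_max A) /\ eigenvalue A (lam_min A)).
Proof.
case: n A => [|n] A At.
  by split; [|split] => // x; rewrite qform_dim0 sqnorm_dim0 mulr0.
have [D [De Dq]] := @real_core _ _ _ At.
have [im Him] := @exists_max _ _ D.
have [jm Hjm] := @exists_min _ _ D.
have ub a : eigenvalue A a -> a <= D im.
  move=> /(@eig_vec _ _ _ _ At) [x xp qx].
  have [w [w0 [ws qw]]] := Dq x.
  rewrite -(ler_pM2r xp) -qx qw -ws mulr_sumr ler_sum // => i _.
  by apply: ler_wpM2r.
have lb a : eigenvalue A a -> D jm <= a.
  move=> /(@eig_vec _ _ _ _ At) [x xp qx].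
  have [w [w0 [ws qw]]] := Dq x.
  rewrite -(ler_pM2r xp) -qx qw -ws mulr_sumr ler_sum // => i _.
  by apply: ler_wpM2r.
have Emax : lam_max A = D im.
  apply/eqP; rewrite eq_le; apply/andP; split.
    by apply: ge_sup; [exists (D im); exact: De | move=> a; exact: ub].
  apply: sup_upper_bound; last exact: De.
  by split; [exists (D im); exact: De | exists (D im) => a; exact: ub].
have Emin : lam_min A = D jm.
  apply/eqP; rewrite eq_le; apply/andP; split; last first.
    by apply: lb_le_inf; [exists (D jm); exact: De | move=> a; exact: lb].
  apply: ge_inf; last exact: De.
  by exists (D jm) => a; exact: lb.
rewrite Emax Emin; split; [|split].
- move=> x; have [w [w0 [ws qw]]] := Dq x.
  rewrite qw -ws mulr_sumr ler_sum // => i _.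
  by apply: ler_wpM2r.
- move=> x; have [w [w0 [ws qw]]] := Dq x.
  rewrite qw -ws mulr_sumr ler_sum // => i _.
  by apply: ler_wpM2r.
- by move=> _; split; apply: De.
Qed.

Local Open Scope classical_set_scope.
Lemma eig_dim0 (R : realType) (A : 'M[R]_0) a : ~ eigenvalue A a.
Proof. by rewrite /eigenvalue thinmx0 eqxx. Qed.

Lemma lam_nonneg (R : realType) n (A : 'M[R]_n) : A^T = A ->
  (forall x, 0 <= qform A x) -> 0 <= lam_min A /\ 0 <= lam_max A.
Proof.
case: n A => [|n] A At Ap.
  have E : [set a : R | eigenvalue A a] = set0.
    by rewrite predeqE => a; split => // /eig_dim0.
  by rewrite /lam_min /lam_max E inf0 sup0.
have [_ [_ /(_ isT) [e1 e2]]] := @rayleigh _ _ _ At.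
have pos a : eigenvalue A a -> 0 <= a.
  move=> /(@eig_vec _ _ _ _ At) [x xp qx].
  by rewrite -(pmulr_lge0 _ xp) -qx.
by split; apply: pos.
Qed.

Lemma lam_min_pos (R : realType) n (A : 'M[R]_n) : A^T = A ->
  (forall x, 0 <= qform A x) -> A \in unitmx -> (0 < n)%N -> 0 < lam_min A.
Proof.
move=> At Ap Au n0.
have [_ [_ /(_ n0) [_ e2]]] := @rayleigh _ _ _ At.
have [h _] := @lam_nonneg _ _ _ At Ap.
rewrite lt_def h andbT; apply/eqP => e0; move: e2; rewrite e0.
move=> /eigenvalueP [v vA v0]; move/eqP: v0; apply.
by rewrite -(mulmxK Au v) vA scale0r mul0mx.
Qed.

Lemma qform_diag (R : realType) n (l : 'rV[R]_n) (x : 'cV[R]_n) :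
  qform (diag_mx l) x = \sum_j l 0 j * x j 0 ^+ 2.
Proof.
rewrite /qform mul_mx_diag mxE; apply: eq_bigr => j _.
rewrite !mxE; ring.
Qed.

Lemma amgm (R : realType) n (a b : 'cV[R]_n) s : 0 < s ->
  2 * (a^T *m b) 0 0 <= s * sqnorm a + sqnorm b / s.
Proof.
move=> s0; rewrite mxE /sqnorm !mulr_sumr mulr_suml -big_split /=.
apply: ler_sum => i _; rewrite mxE.
set u := a i 0; set v := b i 0.
have t0 : 0 < s^-1 by rewrite invr_gt0.
have st : s * s^-1 = 1 by rewrite mulfV // gt_eqF.
have h : 0 <= (s * u - v) ^+ 2 * s^-1 by rewrite mulr_ge0 // ?sqr_ge0 ?ltW.
have e : (s * u - v) ^+ 2 * s^-1 = s * u ^+ 2 - 2 * (u * v) + v ^+ 2 / s.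
  by field; rewrite gt_eqF.
lra.
Qed.

Lemma spec_bound (R : realType) n (M : 'M[R]_n) x :
  qform M x <= spec_norm M * sqnorm x.
Proof.
set B := M^T *m M.
have Bt : B^T = B by rewrite /B trmx_mul trmxK.
have qB y : qform B y = sqnorm (M *m y).
  by rewrite sqnormE /qform /B trmx_mul !mulmxA.
have [_ hmu] : 0 <= lam_min B /\ 0 <= lam_max B.
  by apply: lam_nonneg => // y; rewrite qB sqnorm_ge0.
have [r1 _] := @rayleigh _ _ _ Bt.
have hM := r1 x; rewrite qB in hM.
have qE : qform M x = (x^T *m (M *m x)) 0 0 by rewrite /qform mulmxA.
rewrite /spec_norm -/B.
set s := Num.sqrt (lam_max B).
have s2 : s ^+ 2 = lam_max B by rewrite sqr_sqrtr.
have [s0|] := ltP 0 s.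
  have := @amgm _ _ x (M *m x) s s0; rewrite -qE.
  have : sqnorm (M *m x) / s <= s * sqnorm x.
    by rewrite ler_pdivrMr // (_ : s * sqnorm x * s = lam_max B * sqnorm x) // -s2; ring.
  lra.
rewrite le_eqVlt ltNge sqrtr_ge0 orbF => /eqP s0.
have mu0 : lam_max B = 0.
  by rewrite -s2 s0 expr2 mul0r.
rewrite s0 mul0r qE.
have : sqnorm (M *m x) = 0.
  by apply/eqP; rewrite eq_le sqnorm_ge0 andbT; move: hM; rewrite mu0 mul0r.
by move/sqnorm_eq0 => ->; rewrite mulmx0 mxE.
Qed.

Lemma inv_bound (R : realType) r (Am : 'M[R]_r) (c b : 'cV[R]_r) :
  Am^T = Am -> (forall x, 0 <= qform Am x) -> Am \in unitmx -> Am *m c = b ->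
  qform Am c <= sqnorm b / lam_min Am.
Proof.
case: r Am c b => [|r] Am c b At Ap Au Acb.
  rewrite qform_dim0 divr_ge0 ?sqnorm_ge0 //.
  by have [] := @lam_nonneg _ _ _ At Ap.
have l0 := @lam_min_pos _ _ _ At Ap Au isT.
have [_ [r2 _]] := @rayleigh _ _ _ At.
have := r2 c; have := @amgm _ _ c b _ l0.
have -> : (c^T *m b) 0 0 = qform Am c by rewrite /qform -Acb mulmxA.
lra.
Qed.

Lemma qform_conj (R : realType) m n (A : 'M[R]_(m, n)) (L : 'M[R]_n) x :
  qform (A *m L *m A^T) x = qform L (A^T *m x).
Proof. by rewrite /qform trmx_mul trmxK !mulmxA. Qed.

Lemma qform_conj2 (R : realType) m n (A : 'M[R]_(m, n)) (L : 'M[R]_m) x :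
  qform (A^T *m L *m A) x = qform L (A *m x).
Proof. by rewrite /qform trmx_mul !mulmxA. Qed.
Theorem lemma2 (R : realType) (r q k : nat)
  (Sigma U : 'M[R]_(r + q)) (d : 'rV[R]_(r + q))
  (beta : 'cV[R]_(r + q)) (S : 'M[R]_(r + q, k)) (xi_star : 'cV[R]_k) :
  psd Sigma ->
  U^T *m U = 1%:M ->
  (forall i j : 'I_(r + q), (i <= j)%N -> d 0 j <= d 0 i) ->
  Sigma = U *m diag_mx d *m U^T ->
  (r <= k)%N ->
  let Ur := lsubmx U in
  let Upr := rsubmx U in
  let Lpr := diag_mx (rsubmx d) in
  let Sigpr := Upr *m Lpr *m Upr^T in
  let S1 := Ur^T *m S in
  let S2 := Upr^T *m S in
  let b1 := Ur^T *m beta in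
  let b2 := Upr^T *m beta in
  S1 *m S1^T \in unitmx ->
  S2^T *m Lpr *m S2 \in unitmx ->
  Ur^T *m (beta - S *m xi_star) = 0 ->
  (forall xi : 'cV[R]_k, Ur^T *m (beta - S *m xi) = 0 ->
     qform Sigpr (beta - S *m xi_star) <= qform Sigpr (beta - S *m xi)) ->
  let L1 := spec_norm (S2^T *m Lpr *m S2) / lam_min (S1 *m S1^T) * sqnorm b1 in
  let L2 := (1 + cond_num (S2^T *m Lpr *m S2) * cond_num (S1 *m S1^T))
            * qform Lpr b2 in
  qform Sigpr (beta - S *m xi_star) <= 2 * L1 + 2 * L2.
Proof.
move=> Hpsd UtU _ SigE _ Ur Upr Lpr Sigpr S1 S2 b1 b2 A1u Mu feas opt; cbv zeta.
have d0 j : 0 <= d 0 j.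
  have := Hpsd.2 (U *m delta_mx j 0).
  rewrite SigE trmx_mul !mulmxA -(mulmxA _ U^T U) UtU mulmx1.
  rewrite -(mulmxA _ U^T U) UtU mulmx1 trmx_delta -rowE row_diag_mx.
  by rewrite -scalemxAl mul_delta_mx !mxE !eqxx mulr1.
have Lq y : 0 <= qform Lpr y.
  by rewrite qform_diag sumr_ge0 // => j _; rewrite mulr_ge0 ?sqr_ge0 // mxE.
set Am := S1 *m S1^T.
set M := S2^T *m Lpr *m S2.
have Amt : Am^T = Am by rewrite /Am trmx_mul trmxK.
have Amq y : 0 <= qform Am y.
  by rewrite (_ : qform Am y = sqnorm (S1^T *m y)) ?sqnorm_ge0 // sqnormE /qform trmx_mul trmxK !mulmxA.
have Mt : M^T = M.
  by rewrite /M !trmx_mul !trmxK /Lpr tr_diag_mx !mulmxA.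
have Mq y : 0 <= qform M y by rewrite /M qform_conj2.
set c := invmx Am *m b1.
set xa := S1^T *m c.
have feasa : Ur^T *m (beta - S *m xa) = 0.
  apply/eqP; rewrite mulmxBr subr_eq0 mulmxA.
  by rewrite -/S1 /xa mulmxA -/Am /c mulKVmx.
have h1 := opt xa feasa.
have e1 : qform Sigpr (beta - S *m xa) = qform Lpr (b2 - S2 *m xa).
  by rewrite /Sigpr qform_conj mulmxBr mulmxA.
have h2 : qform Lpr (b2 - S2 *m xa) <= 2 * qform Lpr b2 + 2 * qform Lpr (S2 *m xa).
  rewrite /Lpr !qform_diag !mulr_sumr -big_split ler_sum // => j _.
  have dj : 0 <= rsubmx d 0 j by rewrite mxE.
  rewrite /= [(b2 - _) j 0]mxE [(- (S2 *m xa)) j 0]mxE.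
  have := mulr_ge0 dj (sqr_ge0 (b2 j 0 + (S2 *m xa) j 0)); nra.
have e3 : qform Lpr (S2 *m xa) = qform M xa by rewrite /M qform_conj2.
have h4 := @spec_bound _ _ M xa.
have e5 : sqnorm xa = qform Am c by rewrite sqnormE /qform /xa trmx_mul trmxK !mulmxA.
have h6 : qform Am c <= sqnorm b1 / lam_min Am.
  by apply: inv_bound => //; rewrite /c mulKVmx.
have sp0 : 0 <= spec_norm M by exact: sqrtr_ge0.
have [lA0 lA1] := @lam_nonneg _ _ _ Amt Amq.
have [lM0 lM1] := @lam_nonneg _ _ _ Mt Mq.
have k0 : 0 <= cond_num M * cond_num Am by rewrite mulr_ge0 // divr_ge0.
have qb0 := Lq b2.
have h7 : spec_norm M * sqnorm xa <= spec_norm M / lam_min Am * sqnorm b1.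
  by rewrite mulrAC -mulrA ler_wpM2l // e5.
rewrite -/M -/Am.
move: h1; rewrite e1 => h1.
rewrite e3 in h2.
nra.
Qed.
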